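(* Let $A_1,\dots,A_m\in\mathbb{S}^n$, $b\in\mathbb{R}^m$, $C\in\mathbb{S}^n$. Let $X\in\mathcal{C}$ be a global optimum of (SDP) and assume strong duality holds, i.e., the dual problem $\max_{\nu\in\mathbb{R}^m}\langle b,\nu\rangle$ subject to $C-\mathcal{A}^*(\nu)\succeq0$ has an optimal solution $\nu$ with $\langle b,\nu\rangle=\langle C,X\rangle$. Let Assumption 1(a) hold with $p=\operatorname{rank}(X)$. Then, writing $X=YY^\top$ with $Y\in\mathbb{R}^{n\times p}$ and $S=S(Y)$, we have $S\succeq0$ and $\langle S,X\rangle=0$.
   Context: $\mathbb{S}^n$: real symmetric $n\times n$ matrices; $\langle U,V\rangle=\operatorname{tr}(U^\top V)$. $\mathcal{A}(X)_i=\langle A_i,X\rangle$, $\mathcal{A}^*(\nu)=\sum_i\nu_iA_i$. $\mathcal{C}=\{X\in\mathbb{S}^n:\mathcal{A}(X)=b,\ X\succeq0\}$; (SDP): minimize $\langle C,X\rangle$ over $\mathcal{C}$. $\mathcal{M}_p=\{Y\in\mathbb{R}^{n\times p}:\mathcal{A}(YY^\top)=b\}$. Assumption 1(a) for $p$: $A_1Y,\dots,A_mY$ are linearly independent in $\mathbb{R}^{n\times p}$ for all $Y\in\mathcal{M}_p$. For $Y\in\mathcal{M}_p$: $G_{ij}=\langle A_iY,A_jY\rangle$, $\mu=G^\dagger\mathcal{A}(CYY^\top)$ (Moore–Penrose pseudo-inverse), and $S(Y)=C-\mathcal{A}^*(\mu)$; this depends on $Y$ only through $YY^\top$. *)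

(* Defs.v *)
From HB Require Import structures.
From mathcomp Require Import all_boot all_order all_algebra.
From mathcomp Require Import reals.
Set Implicit Arguments. Unset Strict Implicit. Unset Printing Implicit Defensive.
Import Order.TTheory GRing.Theory Num.Theory.
Local Open Scope ring_scope.

Section Defs.
Variable R : realType.

Definition frob {n k : nat} (U V : 'M[R]_(n, k)) : R := \tr (U^T *m V).

Definition symmx {n : nat} (M : 'M[R]_n) : Prop := M^T = M.

Definition psd {n : nat} (M : 'M[R]_n) : Prop :=
  symmx M /\ forall v : 'cV[R]_n, 0 <= (v^T *m M *m v) 0 0.

Definition Aop {n m : nat} (A : 'I_m -> 'M[R]_n) (X : 'M[R]_n) : 'cV[R]_m :=
  \col_i frob (A i) X.

Definition Aadj {n m : nat} (A : 'I_m -> 'M[R]_n) (nu : 'cV[R]_m) : 'M[R]_n :=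
  \sum_i nu i 0 *: A i.

Definition sdp_feasible {n m : nat} (A : 'I_m -> 'M[R]_n) (b : 'cV[R]_m)
  (X : 'M[R]_n) : Prop := Aop A X = b /\ psd X.

Definition sdp_optimal {n m : nat} (A : 'I_m -> 'M[R]_n) (b : 'cV[R]_m)
  (C X : 'M[R]_n) : Prop :=
  sdp_feasible A b X /\
  forall X' : 'M[R]_n, sdp_feasible A b X' -> frob C X <= frob C X'.

Definition dual_feasible {n m : nat} (A : 'I_m -> 'M[R]_n) (C : 'M[R]_n)
  (nu : 'cV[R]_m) : Prop := psd (C - Aadj A nu).

Definition dual_optimal {n m : nat} (A : 'I_m -> 'M[R]_n) (b : 'cV[R]_m)
  (C : 'M[R]_n) (nu : 'cV[R]_m) : Prop :=
  dual_feasible A C nu /\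
  forall nu' : 'cV[R]_m, dual_feasible A C nu' -> frob b nu' <= frob b nu.

Definition inMp {n m p : nat} (A : 'I_m -> 'M[R]_n) (b : 'cV[R]_m)
  (Y : 'M[R]_(n, p)) : Prop := Aop A (Y *m Y^T) = b.

Definition assumption1a {n m : nat} (A : 'I_m -> 'M[R]_n) (b : 'cV[R]_m)
  (p : nat) : Prop :=
  forall Y : 'M[R]_(n, p), inMp A b Y ->
    forall c : 'I_m -> R, \sum_i c i *: (A i *m Y) = 0 -> forall i, c i = 0.

Definition gram {n m p : nat} (A : 'I_m -> 'M[R]_n) (Y : 'M[R]_(n, p))
  : 'M[R]_m := \matrix_(i, j) frob (A i *m Y) (A j *m Y).

Definition is_MP_pinv {m : nat} (G Gp : 'M[R]_m) : Prop :=
  [/\ G *m Gp *m G = G, Gp *m G *m Gp = Gp,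
      (G *m Gp)^T = G *m Gp & (Gp *m G)^T = Gp *m G].

Definition Smat {n m p : nat} (A : 'I_m -> 'M[R]_n) (C : 'M[R]_n)
  (Y : 'M[R]_(n, p)) (Gp : 'M[R]_m) : 'M[R]_n :=
  C - Aadj A (Gp *m Aop A (C *m (Y *m Y^T))).

End Defs.

(* Main.v *)
Require Import Defs.
From HB Require Import structures.
From mathcomp Require Import all_boot all_order all_algebra.
From mathcomp Require Import reals.
From mathcomp Require Import ring lra.
Import Order.TTheory GRing.Theory Num.Theory.
Local Open Scope ring_scope.

Section H.
Variable R : realType.

Lemma frobE n k (U V : 'M[R]_(n,k)) : frob U V = \sum_j \sum_i U i j * V i j.
Proof.
rewrite /frob /mxtrace; apply: eq_bigr => j _; rewrite !mxE.
by apply: eq_bigr => i _; rewrite mxE.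
Qed.

Lemma frob_eq0 n k (U : 'M[R]_(n,k)) : frob U U = 0 -> U = 0.
Proof.
rewrite frobE => H; apply/matrixP => i j; rewrite mxE.
have hp : forall i j, 0 <= U i j * U i j by move=> *; rewrite -expr2 sqr_ge0.
have H1 : \sum_i U i j * U i j = 0.
  by apply: (psumr_eq0P _ H) => // j' _; apply: sumr_ge0 => i' _.
have := psumr_eq0P (fun i (_ : true) => hp i j) H1 (i:=i) isT.
by move/eqP; rewrite mulf_eq0 orbb => /eqP.
Qed.

Lemma frob_suml n k (I : finType) (c : I -> R) (U : I -> 'M[R]_(n,k)) V :
  frob (\sum_i c i *: U i) V = \sum_i c i * frob (U i) V.
Proof.
rewrite /frob linear_sum /= mulmx_suml raddf_sum /=.
by apply: eq_bigr => i _; rewrite linearZ /= -scalemxAl linearZ.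
Qed.

Lemma frob_sumr n k (I : finType) (c : I -> R) (U : I -> 'M[R]_(n,k)) V :
  frob V (\sum_i c i *: U i) = \sum_i c i * frob V (U i).
Proof.
rewrite /frob mulmx_sumr raddf_sum /=.
by apply: eq_bigr => i _; rewrite -scalemxAr linearZ.
Qed.

Lemma psd_zero n (S : 'M[R]_n) (v : 'cV[R]_n) :
  psd S -> (v^T *m S *m v) 0 0 = 0 -> S *m v = 0.
Proof.
move=> [sym H] hv.
set u := S *m v.
set a := (u^T *m S *m v) 0 0; set c := (u^T *m S *m u) 0 0.
have hc : 0 <= c by apply: H.
have sw : (v^T *m S *m u) 0 0 = a.
  rewrite /a -[in RHS](trmxK (u^T *m S *m v)) [in RHS]mxE !trmx_mul trmxK sym !mulmxA.
  by rewrite trmxK.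
have E t : ((v + t *: u)^T *m S *m (v + t *: u)) 0 0 = 2 * t * a + t ^+ 2 * c.
  have -> : (v + t *: u)^T = v^T + t *: u^T by rewrite linearD linearZ.
  have aE : forall (A B : 'M[R]_1), (A+B) 0 0 = A 0 0 + B 0 0 by move=> *; rewrite mxE.
  have sE : forall x (A : 'M[R]_1), (x *: A) 0 0 = x * A 0 0 by move=> *; rewrite mxE.
  rewrite !mulmxDl !mulmxDr -!scalemxAl -!scalemxAr !aE !sE.
  rewrite -/a -/c sw hv. ring.
have := H (v + (- a / (c + 1)) *: u); rewrite E => Hq.
have ha : a = 0.
  have hc1 : 0 < c + 1 by lra.
  set t := - a / (c + 1) in Hq.
  have ht : t * (c + 1) = - a by rewrite /t mulfVK // gt_eqF.
  nra.
apply: frob_eq0.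
rewrite /frob /mxtrace big_ord1.
have -> : (u^T *m u) = u^T *m S *m v by rewrite /u trmx_mul sym -mulmxA.
by [].
Qed.

Lemma frobBl n k (U V W : 'M[R]_(n,k)) : frob (U - V) W = frob U W - frob V W.
Proof. by rewrite /frob linearB /= mulmxBl linearB. Qed.

Lemma frob_mulYt n k (U V : 'M[R]_n) (Y : 'M[R]_(n,k)) :
  frob U (V *m Y *m Y^T) = frob (U *m Y) (V *m Y).
Proof. by rewrite /frob mulmxA mxtrace_mulC trmx_mul !mulmxA. Qed.

Lemma col_mul m n p j (A : 'M[R]_(m,n)) (B : 'M[R]_(n,p)) :
  col j (A *m B) = A *m col j B.
Proof. by rewrite !colE mulmxA. Qed.

Lemma psd_frob_zero n k (S : 'M[R]_n) (Y : 'M[R]_(n,k)) :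
  psd S -> frob S (Y *m Y^T) = 0 -> S *m Y = 0.
Proof.
move=> hS; have [sym H] := hS.
rewrite /frob sym mulmxA mxtrace_mulC mulmxA => h0.
have hj : forall j, ((Y^T *m S *m Y) j j) = ((col j Y)^T *m S *m col j Y) 0 0.
  move=> j.
  by rewrite tr_col -!row_mul [in RHS]mxE -col_mul [in RHS]mxE.
have hz : forall j, S *m col j Y = 0.
  move=> j; apply: psd_zero => //; rewrite -hj.
  move: h0; rewrite /mxtrace => h0.
  apply: (psumr_eq0P _ h0) => // j' _; rewrite hj; exact: H.
apply/matrixP => i j.
have := congr1 (fun M : 'cV[R]_n => M i 0) (hz j).
by rewrite -col_mul !mxE.
Qed.

Lemma gram_inj n m p (A : 'I_m -> 'M[R]_n) (b : 'cV[R]_m) (Y : 'M[R]_(n,p))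
  (w : 'cV[R]_m) :
  assumption1a A b p -> inMp A b Y -> gram A Y *m w = 0 -> w = 0.
Proof.
move=> asm hY hG.
set M := \sum_i w i 0 *: (A i *m Y).
have hM : frob M M = 0.
  rewrite {1}/M frob_suml big1 // => i _.
  rewrite /M frob_sumr.
  have := congr1 (fun N : 'cV[R]_m => N i 0) hG; rewrite !mxE => h.
  rewrite -[RHS](mulr0 (w i 0)) -[in RHS]h.
  by congr (_ * _); apply: eq_bigr => j _; rewrite mxE mulrC.
have M0 : M = 0 by apply: frob_eq0.
have hw := asm Y hY (fun i => w i 0) M0.
by apply/matrixP => i j; rewrite ord1 mxE hw.
Qed.
End H.

Theorem proposition6 (R : realType) (n m : nat)
  (A : 'I_m -> 'M[R]_n) (b : 'cV[R]_m) (C X : 'M[R]_n) :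
  (forall i, symmx (A i)) -> symmx C ->
  sdp_optimal A b C X ->
  (exists nu : 'cV[R]_m, dual_optimal A b C nu /\ frob b nu = frob C X) ->
  assumption1a A b (\rank X) ->
  forall (Y : 'M[R]_(n, \rank X)) (Gp : 'M[R]_m),
    X = Y *m Y^T ->
    is_MP_pinv (gram A Y) Gp ->
    psd (Smat A C Y Gp) /\ frob (Smat A C Y Gp) X = 0.
Proof.
move=> hA hC [[feasX psdX] optX] [nu [[dfeas dopt] gap]] asm Y Gp hX [hP1 _ _ _].
set S0 := C - Aadj A nu.
have hS0 : psd S0 by exact: dfeas.
have f0 : frob S0 X = 0.
  rewrite /S0 frobBl /Aadj frob_suml -gap.
  apply/eqP; rewrite subr_eq0; apply/eqP.
  rewrite /frob /mxtrace big_ord1 mxE; apply: eq_bigr => i _.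
  rewrite -feasX !mxE mulrC //.
have hY : inMp A b Y by rewrite /inMp -hX.
have SY : S0 *m Y = 0 by apply: psd_frob_zero => //; rewrite -hX.
have CY : C *m Y = Aadj A nu *m Y.
  by apply/eqP; rewrite -subr_eq0 -mulmxBl -/S0 SY.
have hAop : Aop A (C *m (Y *m Y^T)) = gram A Y *m nu.
  apply/matrixP => j k; rewrite ord1 !mxE.
  rewrite mulmxA CY /Aadj mulmx_suml mulmx_suml.
  under eq_bigr do rewrite -!scalemxAl.
  rewrite frob_sumr; apply: eq_bigr => i _.
  by rewrite frob_mulYt mxE mulrC.
have hmu : Gp *m Aop A (C *m (Y *m Y^T)) = nu.
  rewrite hAop; apply/eqP; rewrite -subr_eq0; apply/eqP.
  apply: (@gram_inj R n m (\rank X) A b Y _ asm hY).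
  by rewrite mulmxBr !mulmxA hP1 subrr.
rewrite /Smat hmu -/S0; split => //.
Qed.
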